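(* Let $\varepsilon>0$ and let $B$ be the closed unit ball of $C(0,1)$ (sup norm). There exists a non-negative, $1$-Lipschitz, $\varepsilon$-convex function $f:B\to\mathbb{R}$ such that for every convex function $g:B\to\mathbb{R}$, $$\sup\{|f(x)-g(x)|:x\in B\}\ge1 .$$
   Context: $C(0,1)$ is the space of continuous real functions on $[0,1]$ with the supremum norm. A function $f$ on a convex set $C$ is $\varepsilon$-convex if $f(tx+(1-t)y)\le tf(x)+(1-t)f(y)+\varepsilon$ for all $x,y\in C$, $t\in[0,1]$. *)

(* Defs.v *)
From Stdlib Require Import Reals Lra.
Open Scope R_scope.

Definition I01 : Type := { t : R | 0 <= t <= 1 }.

(* Points of C(0,1) are represented as functions [0,1] -> R that are continuous. *)
Definition cont01 (u : I01 -> R) : Prop :=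
  forall t : I01, forall eps : R, 0 < eps ->
    exists delta : R, 0 < delta /\
      forall s : I01, Rabs (proj1_sig s - proj1_sig t) < delta ->
        Rabs (u s - u t) < eps.

Definition supdist_le (u v : I01 -> R) (c : R) : Prop :=
  forall s : I01, Rabs (u s - v s) <= c.

Definition unit_ball (u : I01 -> R) : Prop :=
  cont01 u /\ forall s : I01, Rabs (u s) <= 1.

Definition cvx_comb (t : R) (x y : I01 -> R) : I01 -> R :=
  fun s => t * x s + (1 - t) * y s.

Definition eps_convex_on (C : (I01 -> R) -> Prop) (eps : R)
    (f : (I01 -> R) -> R) : Prop :=
  forall x y, C x -> C y -> forall t, 0 <= t <= 1 ->
    f (cvx_comb t x y) <= t * f x + (1 - t) * f y + eps.

Definition convex_on (C : (I01 -> R) -> Prop) (f : (I01 -> R) -> R) : Prop :=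
  eps_convex_on C 0 f.

(* f is 1-Lipschitz on C for the sup norm: |f x - f y| <= ||x - y||,
   i.e. |f x - f y| <= c for every upper bound c of |x - y| on [0,1]. *)
Definition one_lipschitz_on (C : (I01 -> R) -> Prop) (f : (I01 -> R) -> R) : Prop :=
  forall x y, C x -> C y -> forall c, supdist_le x y c -> Rabs (f x - f y) <= c.

(* Main.v *)
Require Import Defs.
From Stdlib Require Import Reals Lra Lia FunctionalExtensionality.
Open Scope R_scope.

Fixpoint sm (f : nat -> R) (n : nat) : R :=
  match n with O => 0 | S n => sm f n + f n end.

Lemma sm_ext f g n : (forall k, (k < n)%nat -> f k = g k) -> sm f n = sm g n.
Proof. induction n; simpl; intros H; [reflexivity|]. rewrite IHn by (intros; apply H; lia). rewrite H by lia. reflexivity. Qed.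

Lemma sm_lin a b f g n : sm (fun k => a * f k + b * g k) n = a * sm f n + b * sm g n.
Proof. induction n; simpl; [ring|]. rewrite IHn. ring. Qed.

Lemma sm_scal a f n : sm (fun k => a * f k) n = a * sm f n.
Proof. induction n; simpl; [ring|]. rewrite IHn. ring. Qed.

Lemma sm_plus f g n : sm (fun k => f k + g k) n = sm f n + sm g n.
Proof. induction n; simpl; [ring|]. rewrite IHn. ring. Qed.

Lemma sm_le f g n : (forall k, (k < n)%nat -> f k <= g k) -> sm f n <= sm g n.
Proof. induction n; simpl; intros H; [lra|]. assert (f n <= g n) by (apply H; lia).
 assert (sm f n <= sm g n) by (apply IHn; intros; apply H; lia). lra. Qed.

Lemma sm_nonneg f n : (forall k, 0 <= f k) -> 0 <= sm f n.
Proof. intros H; induction n; simpl; [lra|]. specialize (H n). lra. Qed.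

Lemma sm_zero f n : (forall k, (k < n)%nat -> f k = 0) -> sm f n = 0.
Proof. induction n; simpl; intros H; [reflexivity|]. rewrite IHn by (intros; apply H; lia). rewrite H by lia. ring. Qed.

Lemma sm_beyond f N n : (forall k, (N <= k)%nat -> f k = 0) -> (N <= n)%nat -> sm f n = sm f N.
Proof. intros H Hn. induction Hn; [reflexivity|]. simpl. rewrite IHHn, H by lia. ring. Qed.

Lemma sm_mono f n m : (forall k, 0 <= f k) -> (n <= m)%nat -> sm f n <= sm f m.
Proof. intros H Hn. induction Hn; [lra|]. simpl. specialize (H m). lra. Qed.

Lemma term_le_sm f k n : (forall k, 0 <= f k) -> (k < n)%nat -> f k <= sm f n.
Proof. intros H Hk. apply Rle_trans with (sm f (S k)).
 simpl. pose proof (sm_nonneg f k H). lra. apply sm_mono; auto. Qed.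

Lemma sm_const n : sm (fun _ => 1) n = INR n.
Proof. induction n; simpl sm; [simpl; ring|]. rewrite IHn, S_INR. ring. Qed.

Definition phi (x : R) : R := - x * ln x.

Lemma ln_le_x1 y : 0 < y -> ln y <= y - 1.
Proof. intros H. pose proof (exp_ineq1_le (ln y)). rewrite exp_ln in H0 by lra. lra. Qed.

Lemma ln_mono x y : 0 < x -> x <= y -> ln x <= ln y.
Proof. intros H1 H2. destruct (Req_dec x y). subst; lra. left. apply ln_increasing; lra. Qed.

Lemma ln_le0 x : 0 < x -> x <= 1 -> ln x <= 0.
Proof. intros. rewrite <- ln_1. apply ln_mono; lra. Qed.

Lemma ln_nonpos_any x : x <= 1 -> ln x <= 0.
Proof. intros. destruct (Rlt_dec 0 x). apply ln_le0; lra.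
 unfold ln. destruct (Rlt_dec 0 x); [contradiction|lra]. Qed.

Lemma ln_0 : ln 0 = 0.
Proof. unfold ln. destruct (Rlt_dec 0 0) as [h|h]. exfalso; exact (Rlt_irrefl 0 h). reflexivity. Qed.

Lemma phi_nonneg x : 0 <= x <= 1 -> 0 <= phi x.
Proof. intros H. unfold phi. pose proof (ln_nonpos_any x). nra. Qed.

Lemma part_bound t a b : 0 <= t -> 0 <= a -> 0 <= t * a <= t * a + b ->
  - (t * a) * ln (t * a + b) <= - (t * a) * (ln a + ln t).
Proof. intros Ht Ha [H1 H2]. destruct (Req_dec (t*a) 0) as [E|E].
 rewrite E. lra.
 assert (0 < t) by (destruct (Req_dec t 0); [subst; lra| lra]).
 assert (0 < a) by (destruct (Req_dec a 0); [subst; lra| lra]).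
 rewrite (Rplus_comm (ln a) (ln t)), <- ln_mult by lra.
 assert (ln (t*a) <= ln (t*a+b)) by (apply ln_mono; nra). nra. Qed.

Lemma phi_mix t a b : 0 <= t <= 1 -> 0 <= a -> 0 <= b ->
  phi (t * a + (1 - t) * b) <= t * phi a + (1 - t) * phi b - t * a * ln t - (1 - t) * b * ln (1 - t).
Proof. intros Ht Ha Hb. unfold phi.
 pose proof (part_bound t a ((1-t)*b) ltac:(lra) Ha ltac:(nra)).
 pose proof (part_bound (1-t) b (t*a) ltac:(lra) Hb ltac:(nra)).
 rewrite (Rplus_comm ((1-t)*b) (t*a)) in H0. nra. Qed.

Lemma h_bound t : 0 <= t <= 1 -> - t * ln t - (1 - t) * ln (1 - t) <= ln 2.
Proof. intros Ht. assert (L2: 0 < ln 2) by (pose proof ln_lt_2; lra).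
 destruct (Req_dec t 0). subst. replace (1-0) with 1 by ring. rewrite ln_1. lra.
 destruct (Req_dec t 1). subst. replace (1-1) with 0 by ring. rewrite ln_1. lra.
 assert (A1 := ln_le_x1 (/ (2 * t)) ltac:(apply Rinv_0_lt_compat; lra)).
 assert (A2 := ln_le_x1 (/ (2 * (1 - t))) ltac:(apply Rinv_0_lt_compat; lra)).
 rewrite ln_Rinv, ln_mult in A1 by lra. rewrite ln_Rinv, ln_mult in A2 by lra.
 assert (t * (/ (2*t)) = /2) by (field; lra).
 assert ((1-t) * (/ (2*(1-t))) = /2) by (field; lra).
 assert (t * (- (ln 2 + ln t)) <= t * (/ (2 * t) - 1)) by (apply Rmult_le_compat_l; lra).
 assert ((1-t) * (- (ln 2 + ln (1-t))) <= (1-t) * (/ (2 * (1-t)) - 1)) by (apply Rmult_le_compat_l; lra).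
 nra. Qed.

Definition clamp (y : R) : R := Rmax (-1) (Rmin 1 y).

Lemma clamp_bound y : Rabs (clamp y) <= 1.
Proof. unfold clamp, Rmax, Rmin. apply Rabs_le. repeat destruct Rle_dec; lra. Qed.

Lemma clamp_lip a b : Rabs (clamp a - clamp b) <= Rabs (a - b).
Proof. unfold clamp, Rmax, Rmin. repeat destruct Rle_dec; unfold Rabs; repeat destruct Rcase_abs; lra. Qed.

Lemma clamp_hi y : 1 <= y -> clamp y = 1.
Proof. unfold clamp, Rmax, Rmin. intros. repeat destruct Rle_dec; lra. Qed.

Lemma clamp_lo y : y <= -1 -> clamp y = -1.
Proof. unfold clamp, Rmax, Rmin. intros. repeat destruct Rle_dec; lra. Qed.

Definition uu (i : nat) (s : I01) : R := clamp (2 * cos (2 * PI * (4 ^ i * proj1_sig s))).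

Lemma uu_bound i s : Rabs (uu i s) <= 1.
Proof. apply clamp_bound. Qed.

Lemma cos_cont_eps a eps : 0 < eps -> exists d, 0 < d /\ forall y, Rabs (y - a) < d -> Rabs (cos y - cos a) < eps.
Proof. intros He. pose proof (continuity_cos a) as H.
 unfold continuity_pt, continue_in, limit1_in, limit_in in H. simpl in H.
 destruct (H eps He) as [d [Hd Hy]]. exists d; split; auto. intros y Hya.
 destruct (Req_dec y a). subst. rewrite Rminus_diag, Rabs_R0. lra.
 apply Hy. split. split; [exact I| auto]. unfold R_dist. auto. Qed.

Lemma uu_cont i : cont01 (uu i).
Proof. intros t eps He. set (K := 2 * PI * 4 ^ i).
 assert (HK : 0 < K) by (unfold K; pose proof PI_RGT_0; pose proof (pow_lt 4 i ltac:(lra)); nra).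
 destruct (cos_cont_eps (K * proj1_sig t) (eps/2) ltac:(lra)) as [d [Hd H]].
 exists (d / K). split. apply Rdiv_lt_0_compat; lra.
 intros s Hs. unfold uu. eapply Rle_lt_trans. apply clamp_lip.
 replace (2 * PI * (4 ^ i * proj1_sig s)) with (K * proj1_sig s) by (unfold K; ring).
 replace (2 * PI * (4 ^ i * proj1_sig t)) with (K * proj1_sig t) by (unfold K; ring).
 replace (2 * cos (K * proj1_sig s) - 2 * cos (K * proj1_sig t)) with (2 * (cos (K * proj1_sig s) - cos (K * proj1_sig t))) by ring.
 rewrite Rabs_mult, Rabs_right by lra.
 assert (Rabs (K * proj1_sig s - K * proj1_sig t) < d).
 { replace (K * proj1_sig s - K * proj1_sig t) with (K * (proj1_sig s - proj1_sig t)) by ring.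
   rewrite Rabs_mult, (Rabs_right K) by lra.
   apply Rmult_lt_reg_l with (/K). apply Rinv_0_lt_compat; lra.
   rewrite <- Rmult_assoc, Rinv_l, Rmult_1_l by lra. unfold Rdiv in Hs. lra. }
 specialize (H _ H0). lra. Qed.

Fixpoint tl (b : nat -> bool) (i n : nat) : R :=
  match n with O => 0 | S n => (if b i then /2 else 0) + tl b (S i) n / 4 end.

Lemma tl_bound b n : forall i, 0 <= tl b i n <= 2/3.
Proof. induction n; intros i; simpl; [lra|]. specialize (IHn (S i)). destruct (b i); lra. Qed.

Lemma tl_shift b i : forall n, exists K : nat, 4 ^ i * tl b 0 (i + n) = INR K + tl b i n.
Proof. induction i; intros n.
 - exists O. simpl. ring.
 - destruct (IHi (S n)) as [K HK]. replace (S i + n)%nat with (i + S n)%nat by lia.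
   exists (4 * K + (if b i then 2 else 0))%nat. simpl pow. rewrite Rmult_assoc, HK.
   rewrite plus_INR, mult_INR. simpl tl. destruct (b i); simpl INR; field. Qed.

Lemma cos_ge_half y : 0 <= y <= PI / 3 -> 1/2 <= cos y.
Proof. intros H. rewrite <- cos_PI3. pose proof PI_RGT_0. apply cos_decr_1; lra. Qed.

Lemma uu_at b L k (Hk : (k < L)%nat) (s : I01) : proj1_sig s = tl b 0 L ->
  uu k s = if b k then -1 else 1.
Proof. intros Hs. unfold uu. rewrite Hs. replace L with (k + S (L - S k))%nat by lia.
 destruct (tl_shift b k (S (L - S k))) as [K HK]. rewrite HK. simpl tl.
 pose proof (tl_bound b (L - S k) (S k)) as Hb. set (r := tl b (S k) (L - S k)) in *.
 pose proof PI_RGT_0.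
 destruct (b k).
 - rewrite Rmult_plus_distr_l.
   replace (2 * PI * INR K + 2 * PI * (/ 2 + r / 4)) with ((2 * PI * (r/4) + PI) + 2 * INR K * PI) by field.
   rewrite cos_period, neg_cos. apply clamp_lo.
   assert (1/2 <= cos (2 * PI * (r / 4))) by (apply cos_ge_half; split; nra). lra.
 - rewrite Rmult_plus_distr_l.
   replace (2 * PI * INR K + 2 * PI * (0 + r / 4)) with ((2 * PI * (r/4)) + 2 * INR K * PI) by ring.
   rewrite cos_period. apply clamp_hi.
   assert (1/2 <= cos (2 * PI * (r / 4))) by (apply cos_ge_half; split; nra). lra.
Qed.

Definition Up (p : nat -> R) (n : nat) : I01 -> R := fun s => sm (fun k => p k * uu k s) n.
Definition Ent (p : nat -> R) (n : nat) : R := sm (fun k => phi (p k)) n.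
Definition valid (N : nat) (p : nat -> R) : Prop :=
  (forall k, 0 <= p k) /\ (forall k, (N <= k)%nat -> p k = 0) /\ sm p N = 1.
Definition Sx (w : R) (x : I01 -> R) (v : R) : Prop :=
  exists N p r, valid N p /\ supdist_le x (Up p N) r /\ v = w * Ent p N + r.
Definition Tx (w : R) (x : I01 -> R) (v : R) : Prop := v = 2 \/ (0 <= v /\ Sx w x v).

Definition negT w x : R -> Prop := fun y => Tx w x (- y).
Lemma negT_bound w x : bound (negT w x).
Proof. exists 0. intros y [H|[H _]]; lra. Qed.
Lemma negT_ne w x : exists y, negT w x y.
Proof. exists (-2). left. ring. Qed.
Definition F (w : R) (x : I01 -> R) : R :=
  - proj1_sig (completeness (negT w x) (negT_bound w x) (negT_ne w x)).

Lemma F_low w x v : Tx w x v -> F w x <= v.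
Proof. intros H. unfold F. destruct (completeness _ _ _) as [m [Hm1 Hm2]]. simpl.
 assert (negT w x (-v)) by (unfold negT; rewrite Ropp_involutive; auto).
 specialize (Hm1 _ H0). lra. Qed.

Lemma F_great w x y : (forall v, Tx w x v -> y <= v) -> y <= F w x.
Proof. intros H. unfold F. destruct (completeness _ _ _) as [m [Hm1 Hm2]]. simpl.
 assert (m <= -y). { apply Hm2. intros z Hz. specialize (H _ Hz). lra. } lra. Qed.

Definition s0 : I01 := exist (fun t => 0 <= t <= 1) 0 ltac:(lra).

Lemma supdist_nonneg x y r : supdist_le x y r -> 0 <= r.
Proof. intros H. specialize (H s0). pose proof (Rabs_pos (x s0 - y s0)). lra. Qed.

Lemma valid_sum_le N p n : valid N p -> sm p n <= 1.
Proof. intros [H1 [H2 H3]]. rewrite <- H3. rewrite <- (sm_beyond p N (n + N)) by (auto; lia).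
 apply sm_mono; auto; lia. Qed.

Lemma valid_le1 N p k : valid N p -> p k <= 1.
Proof. intros Hv. pose proof (valid_sum_le N p (S k) Hv). destruct Hv as [H1 _].
 pose proof (term_le_sm p k (S k) H1 ltac:(lia)). lra. Qed.

Lemma Ent_nonneg N p n : valid N p -> 0 <= Ent p n.
Proof. intros Hv. unfold Ent. apply sm_nonneg. intros k. apply phi_nonneg.
 split; [apply Hv| apply (valid_le1 N p k Hv)]. Qed.

Lemma Sx_nonneg w x v : 0 <= w -> Sx w x v -> 0 <= v.
Proof. intros Hw [N [p [r [Hv [Hd ->]]]]]. pose proof (supdist_nonneg _ _ _ Hd).
 pose proof (Ent_nonneg N p N Hv). nra. Qed.

Lemma F_nonneg w x : 0 <= F w x.
Proof. apply F_great. intros v [->|[H _]]; lra. Qed.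

Lemma F_le2 w x : F w x <= 2.
Proof. apply F_low. left; reflexivity. Qed.

Definition e1 (i : nat) : nat -> R := fun k => if Nat.eqb k i then 1 else 0.

Lemma sm_e1 g i : sm (fun k => e1 i k * g k) (S i) = g i.
Proof. simpl. rewrite sm_zero. unfold e1. rewrite Nat.eqb_refl. ring.
 intros k Hk. unfold e1. destruct (Nat.eqb_spec k i); [lia|ring]. Qed.

Lemma valid_e1 i : valid (S i) (e1 i).
Proof. unfold valid. split; [|split]; unfold e1 at 1.
 intros k; destruct (Nat.eqb k i); lra.
 intros k Hk; destruct (Nat.eqb_spec k i); [lia|reflexivity].
 transitivity (sm (fun k => e1 i k * 1) (S i)). apply sm_ext; intros; unfold e1; ring.
 apply (sm_e1 (fun _ => 1)). Qed.

Lemma Ent_e1 i : Ent (e1 i) (S i) = 0.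
Proof. unfold Ent. rewrite sm_zero. reflexivity. intros k Hk. unfold e1, phi.
 destruct (Nat.eqb k i); [rewrite ln_1| rewrite ln_0]; ring. Qed.

Lemma Up_e1 i s : Up (e1 i) (S i) s = uu i s.
Proof. unfold Up. apply (sm_e1 (fun k => uu k s) i). Qed.

Lemma S2 w x : (forall s, Rabs (x s) <= 1) -> Sx w x 2.
Proof. intros Hx. exists 1%nat, (e1 0), 2. split; [apply valid_e1|split].
 intros s. rewrite Up_e1. pose proof (uu_bound 0 s). specialize (Hx s).
 eapply Rle_trans. apply Rabs_triang. rewrite Rabs_Ropp. lra.
 rewrite Ent_e1. ring. Qed.

Lemma F_leaf w i : F w (uu i) <= 0.
Proof. apply F_low. right. split. lra. exists (S i), (e1 i), 0. split; [apply valid_e1|split].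
 intros s. rewrite Up_e1, Rminus_diag, Rabs_R0. lra. rewrite Ent_e1. ring. Qed.

Lemma F_lip1 w x y c : 0 <= w -> supdist_le x y c -> F w x <= F w y + c.
Proof. intros Hw Hc. pose proof (supdist_nonneg _ _ _ Hc).
 assert (F w x - c <= F w y); [|lra]. apply F_great. intros v [->|[Hv0 [N [p [r [Hv [Hd ->]]]]]]].
 pose proof (F_le2 w x). lra.
 assert (F w x <= w * Ent p N + (r + c)); [|lra]. apply F_low. right. split.
 pose proof (supdist_nonneg _ _ _ Hd). pose proof (Ent_nonneg N p N Hv). nra.
 exists N, p, (r + c). split; auto. split; [|ring]. intros s.
 replace (x s - Up p N s) with ((x s - y s) + (y s - Up p N s)) by ring.
 eapply Rle_trans. apply Rabs_triang. specialize (Hc s). specialize (Hd s). lra. Qed.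

Lemma F_lip w x y c : 0 <= w -> supdist_le x y c -> Rabs (F w x - F w y) <= c.
Proof. intros Hw Hc. assert (supdist_le y x c) by (intros s; rewrite Rabs_minus_sym; apply Hc).
 pose proof (F_lip1 w x y c Hw Hc). pose proof (F_lip1 w y x c Hw H). apply Rabs_le; lra. Qed.

Lemma mix_S w x y a b t : 0 <= w -> 0 <= t <= 1 -> Sx w x a -> Sx w y b ->
  exists v, Sx w (cvx_comb t x y) v /\ v <= t * a + (1 - t) * b + w * ln 2.
Proof.
 intros Hw Ht [N [p [r [Hv [Hd ->]]]]] [N' [p' [r' [Hv' [Hd' ->]]]]].
 destruct Hv as [P1 [P2 P3]]. destruct Hv' as [Q1 [Q2 Q3]].
 set (M := Nat.max N N'). set (q := fun k => t * p k + (1 - t) * p' k).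
 assert (HN : (N <= M)%nat) by lia. assert (HN' : (N' <= M)%nat) by lia.
 assert (Hq : valid M q).
 { split; [|split]; unfold q.
   - intros k. specialize (P1 k). specialize (Q1 k). nra.
   - intros k Hk. rewrite P2, Q2 by lia. ring.
   - rewrite sm_lin. rewrite (sm_beyond p N M), (sm_beyond p' N' M); auto. rewrite P3, Q3. ring. }
 assert (HU : forall s, Up q M s = t * Up p N s + (1 - t) * Up p' N' s).
 { intros s. unfold Up. rewrite <- (sm_beyond (fun k => p k * uu k s) N M), <- (sm_beyond (fun k => p' k * uu k s) N' M); auto.
   rewrite <- sm_lin. apply sm_ext. intros; unfold q; ring.
   intros k Hk; rewrite Q2 by lia; ring. intros k Hk; rewrite P2 by lia; ring. }
 assert (HE : Ent q M <= t * Ent p N + (1 - t) * Ent p' N' + ln 2).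
 { unfold Ent. rewrite <- (sm_beyond (fun k => phi (p k)) N M), <- (sm_beyond (fun k => phi (p' k)) N' M); auto.
   2: intros k Hk; rewrite Q2 by lia; unfold phi; ring.
   2: intros k Hk; rewrite P2 by lia; unfold phi; ring.
   eapply Rle_trans. apply sm_le with (g := fun k => (t * phi (p k) + (1 - t) * phi (p' k)) + ((- t * ln t) * p k + (- (1 - t) * ln (1 - t)) * p' k)).
   intros k _. unfold q. pose proof (phi_mix t (p k) (p' k) Ht (P1 k) (Q1 k)). lra.
   rewrite sm_plus, !sm_lin. rewrite (sm_beyond p N M), (sm_beyond p' N' M); auto. rewrite P3, Q3.
   pose proof (h_bound t Ht). lra. }
 exists (w * Ent q M + (t * r + (1 - t) * r')). split.
 - exists M, q, (t * r + (1 - t) * r'). split; auto. split; [|reflexivity].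
   intros s. rewrite HU. unfold cvx_comb.
   replace (t * x s + (1 - t) * y s - (t * Up p N s + (1 - t) * Up p' N' s)) with
     (t * (x s - Up p N s) + (1 - t) * (y s - Up p' N' s)) by ring.
   eapply Rle_trans. apply Rabs_triang. rewrite !Rabs_mult, (Rabs_right t), (Rabs_right (1 - t)) by lra.
   specialize (Hd s). specialize (Hd' s). nra.
 - nra.
Qed.

Lemma F_conv w x y t : 0 <= w -> (forall s, Rabs (x s) <= 1) -> (forall s, Rabs (y s) <= 1) -> 0 <= t <= 1 ->
  F w (cvx_comb t x y) <= t * F w x + (1 - t) * F w y + w * ln 2.
Proof.
 intros Hw Hx Hy Ht. set (z := cvx_comb t x y).
 assert (Cl : forall a b, Tx w x a -> Tx w y b -> F w z <= t * a + (1 - t) * b + w * ln 2).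
 { intros a b Ha Hb.
   assert (Sa : Sx w x a) by (destruct Ha as [->|[_ H]]; [apply S2; auto| auto]).
   assert (Sb : Sx w y b) by (destruct Hb as [->|[_ H]]; [apply S2; auto| auto]).
   destruct (mix_S w x y a b t Hw Ht Sa Sb) as [v [Hv Hle]].
   assert (F w z <= v); [|lra]. apply F_low. right. split; auto. apply (Sx_nonneg w z); auto. }
 assert (Step : forall b, Tx w y b -> F w z <= t * F w x + (1 - t) * b + w * ln 2).
 { intros b Hb. destruct (Req_dec t 0) as [E|E].
   - pose proof (Cl 2 b (or_introl eq_refl) Hb). rewrite E in *. lra.
   - assert ((F w z - (1 - t) * b - w * ln 2) / t <= F w x).
     { apply F_great. intros a Ha. pose proof (Cl a b Ha Hb).
       apply Rmult_le_reg_l with t. lra. unfold Rdiv. field_simplify; [|lra]. lra. }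
     assert (t * ((F w z - (1 - t) * b - w * ln 2) / t) <= t * F w x) by (apply Rmult_le_compat_l; lra).
     replace (t * ((F w z - (1 - t) * b - w * ln 2) / t)) with (F w z - (1 - t) * b - w * ln 2) in H0 by (field; lra).
     lra. }
 destruct (Req_dec t 1) as [E|E].
 - pose proof (Step 2 (or_introl eq_refl)). rewrite E in *. lra.
 - assert ((F w z - t * F w x - w * ln 2) / (1 - t) <= F w y).
   { apply F_great. intros b Hb. pose proof (Step b Hb).
     apply Rmult_le_reg_l with (1 - t). lra. unfold Rdiv. field_simplify; [|lra]. lra. }
   assert ((1 - t) * ((F w z - t * F w x - w * ln 2) / (1 - t)) <= (1 - t) * F w y) by (apply Rmult_le_compat_l; lra).
   replace ((1 - t) * ((F w z - t * F w x - w * ln 2) / (1 - t))) with (F w z - t * F w x - w * ln 2) in H0 by (field; lra).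
   lra.
Qed.

Definition avg (N : nat) : I01 -> R := fun s => / INR N * sm (fun i => uu i s) N.

Definition bsel (th : R) (p : nat -> R) (k : nat) : bool := if Rle_dec th (p k) then true else false.

Lemma key_bound w N : 0 < w -> (1 <= N)%nat ->
  2 - 2 / (INR N * exp (- (2 / w))) <= F w (avg N).
Proof.
 intros Hw HN. set (th := exp (- (2 / w))). assert (Hth : 0 < th) by apply exp_pos.
 assert (HNr : 0 < INR N) by (apply lt_0_INR; lia).
 apply F_great. intros v [->|[_ [M [p [r [Hv [Hd ->]]]]]]].
 { assert (0 < 2 / (INR N * th)) by (apply Rdiv_lt_0_compat; nra). lra. }
 set (b := bsel th p). set (L := (M + N)%nat).
 pose proof (tl_bound b L 0) as Htl.
 set (sx := exist (fun t => 0 <= t <= 1) (tl b 0 L) ltac:(lra) : I01).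
 assert (Hu : forall k, (k < L)%nat -> uu k sx = if b k then -1 else 1).
 { intros k Hk. apply (uu_at b L k Hk sx). reflexivity. }
 set (ind := fun k => if b k then 1 else 0).
 set (qq := fun k => if b k then 0 else p k).
 destruct Hv as [P1 [P2 P3]].
 assert (Hind : sm ind N <= / th).
 { apply Rle_trans with (sm (fun k => / th * p k) N).
   apply sm_le. intros k _. unfold ind, b, bsel. destruct (Rle_dec th (p k)).
   apply Rmult_le_reg_l with th; auto. rewrite <- Rmult_assoc, Rinv_r, Rmult_1_l by lra. lra.
   pose proof (P1 k). pose proof (Rinv_0_lt_compat th Hth). nra.
   rewrite sm_scal. pose proof (valid_sum_le M p N (conj P1 (conj P2 P3))).
   pose proof (Rinv_0_lt_compat th Hth). nra. }
 assert (Havg : avg N sx = / INR N * (INR N - 2 * sm ind N)).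
 { unfold avg. f_equal. transitivity (sm (fun i => 1 * 1 + (-2) * ind i) N).
   apply sm_ext. intros i Hi. rewrite Hu by (unfold L; lia). unfold ind. destruct (b i); ring.
   rewrite sm_lin, sm_const. ring. }
 assert (HUp : Up p M sx = -1 + 2 * sm qq M).
 { unfold Up. transitivity (sm (fun k => (-1) * p k + 2 * qq k) M).
   apply sm_ext. intros k Hk. rewrite Hu by (unfold L; lia). unfold qq. destruct (b k); ring.
   rewrite sm_lin, P3. ring. }
 assert (HQ : sm qq M * (2 / w) <= Ent p M).
 { unfold Ent. rewrite Rmult_comm, <- sm_scal. apply sm_le. intros k _.
   pose proof (valid_le1 M p k (conj P1 (conj P2 P3))). pose proof (P1 k).
   unfold qq, b, bsel. destruct (Rle_dec th (p k)).
   - rewrite Rmult_0_r. apply phi_nonneg. lra.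
   - destruct (Rle_lt_or_eq_dec 0 (p k) (P1 k)) as [Hp|Hp].
     + unfold phi. assert (ln (p k) <= ln th) by (apply ln_mono; lra).
       unfold th in H1. rewrite ln_exp in H1. nra.
     + rewrite <- Hp. unfold phi. rewrite ln_0. lra. }
 specialize (Hd sx). pose proof (Rle_abs (avg N sx - Up p M sx)).
 rewrite Havg, HUp in H, Hd.
 assert (w * (sm qq M * (2 / w)) <= w * Ent p M) by (apply Rmult_le_compat_l; lra).
 replace (w * (sm qq M * (2 / w))) with (2 * sm qq M) in H0 by (field; lra).
 assert (/ INR N * (INR N - 2 * sm ind N) = 1 - 2 * sm ind N / INR N) by (field; lra).
 assert (2 * sm ind N / INR N <= 2 / (INR N * th)).
 { unfold Rdiv. rewrite Rinv_mult. assert (0 < / INR N) by (apply Rinv_0_lt_compat; lra).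
   pose proof (sm_nonneg ind N ltac:(intros k; unfold ind; destruct (b k); lra)). nra. }
 lra.
Qed.

Lemma cont01_ext x y : (forall s, x s = y s) -> cont01 x -> cont01 y.
Proof. intros E H t eps He. destruct (H t eps He) as [d [Hd Hs]]. exists d; split; auto.
 intros s Hst. rewrite <- !E. auto. Qed.

Lemma cont01_lin a b x y : cont01 x -> cont01 y -> cont01 (fun s => a * x s + b * y s).
Proof. intros Hx Hy t eps He.
 set (e1 := eps / (2 * (Rabs a + 1))). set (e2 := eps / (2 * (Rabs b + 1))).
 pose proof (Rabs_pos a). pose proof (Rabs_pos b).
 assert (H1 : 0 < e1) by (unfold e1; apply Rdiv_lt_0_compat; lra).
 assert (H2 : 0 < e2) by (unfold e2; apply Rdiv_lt_0_compat; lra).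
 destruct (Hx t e1 H1) as [d1 [Hd1 Hs1]]. destruct (Hy t e2 H2) as [d2 [Hd2 Hs2]].
 exists (Rmin d1 d2). split. apply Rmin_pos; auto.
 intros s Hs. assert (A1 := Hs1 s ltac:(pose proof (Rmin_l d1 d2); lra)).
 assert (A2 := Hs2 s ltac:(pose proof (Rmin_r d1 d2); lra)).
 replace (a * x s + b * y s - (a * x t + b * y t)) with (a * (x s - x t) + b * (y s - y t)) by ring.
 eapply Rle_lt_trans. apply Rabs_triang. rewrite !Rabs_mult.
 assert (Rabs a * Rabs (x s - x t) <= Rabs a * e1) by (apply Rmult_le_compat_l; lra).
 assert (Rabs b * Rabs (y s - y t) <= Rabs b * e2) by (apply Rmult_le_compat_l; lra).
 assert (Rabs a * e1 < eps / 2). { unfold e1. apply Rmult_lt_reg_l with (2 * (Rabs a + 1)). lra.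
   field_simplify; lra. }
 assert (Rabs b * e2 < eps / 2). { unfold e2. apply Rmult_lt_reg_l with (2 * (Rabs b + 1)). lra.
   field_simplify; lra. }
 lra. Qed.

Lemma cont01_sm n : cont01 (fun s => sm (fun i => uu i s) n).
Proof. induction n.
 - intros t eps He. exists 1. split. lra. intros. simpl. rewrite Rminus_diag, Rabs_R0. lra.
 - apply (cont01_ext (fun s => 1 * sm (fun i => uu i s) n + 1 * uu n s)).
   intros s; simpl; ring. apply cont01_lin; auto. apply uu_cont. Qed.

Lemma avg_B N : (1 <= N)%nat -> unit_ball (avg N).
Proof. intros HN. assert (HNr : 0 < INR N) by (apply lt_0_INR; lia). split.
 - apply (cont01_ext (fun s => / INR N * sm (fun i => uu i s) N + 0 * 0)).
   intros s; unfold avg; ring. apply cont01_lin. apply cont01_sm.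
   intros t eps He. exists 1. split. lra. intros. rewrite Rminus_diag, Rabs_R0. lra.
 - intros s. unfold avg.
   assert (sm (fun i => uu i s) N <= sm (fun _ => 1) N) by (apply sm_le; intros k _; pose proof (uu_bound k s); pose proof (Rle_abs (uu k s)); lra).
   assert (sm (fun _ => -1 * 1) N <= sm (fun i => uu i s) N) by (apply sm_le; intros k _; pose proof (uu_bound k s); pose proof (Rle_abs (- uu k s)); rewrite Rabs_Ropp in *; lra).
   rewrite sm_scal, sm_const in H0. rewrite sm_const in H.
   rewrite Rabs_mult, Rabs_right by (left; apply Rinv_0_lt_compat; lra).
   apply Rmult_le_reg_l with (INR N); auto. rewrite <- Rmult_assoc, Rinv_r, Rmult_1_l, Rmult_1_r by lra.
   apply Rabs_le; lra. Qed.

Lemma uu_B i : unit_ball (uu i).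
Proof. split. apply uu_cont. apply uu_bound. Qed.

Lemma jensen (g : (I01 -> R) -> R) : convex_on unit_ball g ->
  forall n, (1 <= n)%nat -> exists i, (i < n)%nat /\ g (avg n) <= g (uu i).
Proof. intros Hg n Hn. induction Hn.
 - exists O. split. lia. assert (avg 1 = uu 0).
   { apply functional_extensionality. intros s. unfold avg. simpl. field. }
   rewrite H. lra.
 - destruct IHHn as [i [Hi Hgi]].
   assert (Hm : 0 < INR m) by (apply lt_0_INR; lia).
   set (t := / INR (S m)).
   assert (Ht : 0 <= t <= 1). { unfold t. rewrite S_INR. split. left; apply Rinv_0_lt_compat; lra.
     apply Rmult_le_reg_l with (INR m + 1). lra. rewrite Rinv_r by lra. lra. }
   assert (E : avg (S m) = cvx_comb t (uu m) (avg m)).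
   { apply functional_extensionality. intros s. unfold avg, cvx_comb, t. simpl sm. rewrite S_INR. field. lra. }
   pose proof (Hg (uu m) (avg m) (uu_B m) (avg_B m ltac:(lia)) t Ht). rewrite <- E in H.
   destruct (Rle_dec (g (avg m)) (g (uu m))).
   + exists m. split. lia. nra.
   + exists i. split. lia. nra.
Qed.

Theorem corollary7p11 (eps : R) (heps : 0 < eps) :
  exists f : (I01 -> R) -> R,
    (forall x, unit_ball x -> 0 <= f x) /\
    one_lipschitz_on unit_ball f /\
    eps_convex_on unit_ball eps f /\
    forall g : (I01 -> R) -> R, convex_on unit_ball g ->
      (* sup { |f x - g x| : x in B } >= 1 *)
      forall c : R, c < 1 -> exists x, unit_ball x /\ c < Rabs (f x - g x).
Proof.
 assert (L2 : 0 < ln 2) by (pose proof ln_lt_2; lra).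
 set (w := eps / ln 2). assert (Hw : 0 < w) by (unfold w; apply Rdiv_lt_0_compat; lra).
 exists (F w). split; [|split; [|split]].
 - intros; apply F_nonneg.
 - intros x y _ _ c Hc. apply F_lip; [lra|exact Hc].
 - intros x y [_ Hx] [_ Hy] t Ht. pose proof (F_conv w x y t ltac:(lra) Hx Hy Ht).
   replace (w * ln 2) with eps in H by (unfold w; field; lra). exact H.
 - intros g Hg c Hc. set (d := 1 - c). set (th := exp (- (2 / w))).
   assert (Hth : 0 < th) by apply exp_pos.
   destruct (INR_unbounded (2 / (th * d) + 1)) as [N HN].
   assert (Hd : 0 < 2 / (th * d)) by (apply Rdiv_lt_0_compat; unfold d; nra).
   assert (HN1 : (1 <= N)%nat). { destruct N. simpl in HN. lra. lia. }
   assert (HNr : 0 < INR N) by (apply lt_0_INR; lia).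
   pose proof (key_bound w N Hw HN1) as KB. fold th in KB.
   assert (2 / (INR N * th) < d).
   { apply Rmult_lt_reg_l with (INR N * th). nra. unfold Rdiv. rewrite <- Rmult_assoc.
     rewrite (Rmult_comm (INR N * th) 2), Rmult_assoc, Rinv_r, Rmult_1_r by nra.
     assert (2 / (th * d) * (th * d) = 2) by (field; unfold d; lra).
     assert (INR N * (th * d) > (2 / (th * d)) * (th * d)).
     { apply Rmult_gt_compat_r. unfold d; nra. lra. } nra. }
   destruct (jensen g Hg N HN1) as [i [Hi Hgi]].
   destruct (Rlt_dec (g (avg N)) (1 - d / 2)).
   + exists (avg N). split. apply avg_B; auto.
     eapply Rlt_le_trans; [|apply Rle_abs]. unfold d in *. lra.
   + exists (uu i). split. apply uu_B. pose proof (F_leaf w i).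
     rewrite Rabs_minus_sym.
     eapply Rlt_le_trans; [|apply Rle_abs]. unfold d in *. lra.
Qed.
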